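(* The sequence $(\beta^c_k)_{k\in\mathbb{N}}$ is strictly decreasing and $\lim_{k\to+\infty}\beta^c_k=1$.
   Context: $\mathbb{N}=\{0,1,2,\dots\}$. For $t\ge 0$ let $q(t)=\lfloor t+1\rfloor/2$ if $\lfloor t\rfloor$ is odd and $q(t)=t-\lfloor t\rfloor/2$ if $\lfloor t\rfloor$ is even, and $p(t)=t+1-q(t)$. For $\beta\ge1$ let $\hat\sigma(t,\beta)\in(0,1)$ be the unique solution $\sigma$ of $\frac{p(t)\sigma}{\sqrt{1-\sigma^2}}+\frac{q(t)\sigma}{\sqrt{\beta^2-\sigma^2}}=1$, and $l(t,\beta)=\frac{p(t)}{\sqrt{1-\hat\sigma^2}}+\frac{\beta^2q(t)}{\sqrt{\beta^2-\hat\sigma^2}}-t-\sqrt2$. For $k\in\mathbb{N}$, $\delta(k,\beta)=l(2k+2,\beta)-l(2k,\beta)$. For each $k\in\mathbb{N}$, $\beta^c_k$ denotes the unique number in $(1,\sqrt2)$ with $\delta(k,\beta^c_k)=0$ (well defined since $\beta\mapsto\delta(k,\beta)$ is strictly increasing on $[1,\infty)$ with $\delta(k,1)<0<\delta(k,\sqrt2)$). *)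

(* Defs.v *)
From Stdlib Require Import Reals Lra ZArith ClassicalEpsilon.
Open Scope R_scope.

(* floor t = Int_part t (Stdlib: Int_part r = up r - 1, the floor of r) *)
Definition qfun (t : R) : R :=
  if Z.odd (Int_part t) then IZR (Int_part (t + 1)) / 2
  else t - IZR (Int_part t) / 2.

Definition pfun (t : R) : R := t + 1 - qfun t.

Definition sigma_eq (t beta s : R) : Prop :=
  pfun t * s / sqrt (1 - s ^ 2) + qfun t * s / sqrt (beta ^ 2 - s ^ 2) = 1.

(* sigma-hat(t,beta): the (unique) solution in (0,1), chosen by epsilon *)
Definition sigma_hat (t beta : R) : R :=
  epsilon (inhabits 0) (fun s => 0 < s < 1 /\ sigma_eq t beta s).

Definition lfun (t beta : R) : R :=
  let s := sigma_hat t beta in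
  pfun t / sqrt (1 - s ^ 2) + beta ^ 2 * qfun t / sqrt (beta ^ 2 - s ^ 2)
  - t - sqrt 2.

Definition delta (k : nat) (beta : R) : R :=
  lfun (2 * INR k + 2) beta - lfun (2 * INR k) beta.

(* beta^c_k: the (unique) number in (1, sqrt 2) with delta k beta = 0 *)
Definition beta_c (k : nat) : R :=
  epsilon (inhabits 0) (fun b => 1 < b < sqrt 2 /\ delta k b = 0).

(* Main.v *)
Require Import Defs.
From Stdlib Require Import Reals Lra Lia ZArith Psatz ClassicalEpsilon Ranalysis5.
Open Scope R_scope.

Lemma qp_even (k : nat) : qfun (2 * INR k) = INR k /\ pfun (2 * INR k) = INR k + 1.
Proof.
  assert (H : 2 * INR k = INR (2 * k)) by (rewrite mult_INR; simpl; lra).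
  assert (HI : Int_part (2 * INR k) = (2 * Z.of_nat k)%Z).
  { rewrite H, Int_part_INR, Nat2Z.inj_mul; reflexivity. }
  assert (Hq : qfun (2 * INR k) = INR k).
  { unfold qfun; rewrite HI, Z.odd_even, mult_IZR, <- INR_IZR_INZ; lra. }
  split; [exact Hq | unfold pfun; rewrite Hq; lra].
Qed.

Definition F (p q b s : R) := p * sqrt (1 - s ^ 2) + q * sqrt (b ^ 2 - s ^ 2) + s.
Definition Eqn (p q b s : R) := p * s / sqrt (1 - s ^ 2) + q * s / sqrt (b ^ 2 - s ^ 2) = 1.

Lemma sqrt_tangent (A X : R) : 0 < A -> 0 <= X -> sqrt X <= sqrt A + (X - A) / (2 * sqrt A).
Proof.
  intros HA HX.
  pose proof (sqrt_lt_R0 A HA) as Ha. pose proof (sqrt_sqrt A (Rlt_le _ _ HA)) as Ea.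
  pose proof (sqrt_sqrt X HX) as Ex. pose proof (sqrt_pos X).
  apply (Rmult_le_reg_r (2 * sqrt A)); [lra|].
  unfold Rdiv. rewrite Rmult_plus_distr_r, Rmult_assoc, Rinv_l by lra.
  pose proof (pow2_ge_0 (sqrt X - sqrt A)). nra.
Qed.

Lemma max_prop (p q b s x : R) : 0 <= p -> 0 <= q -> 1 <= b -> 0 < s < 1 -> Eqn p q b s ->
  0 <= x <= 1 -> F p q b x <= F p q b s - (x - s) ^ 2 / (2 * s).
Proof.
  intros Hp Hq Hb Hs HE Hx. unfold F, Eqn in *.
  assert (HA : 0 < 1 - s ^ 2) by nra.
  assert (HB : 0 < b ^ 2 - s ^ 2) by nra.
  pose proof (sqrt_tangent _ (1 - x^2) HA ltac:(nra)) as T1.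
  pose proof (sqrt_tangent _ (b^2 - x^2) HB ltac:(nra)) as T2.
  set (a := sqrt (1 - s^2)) in *. set (c := sqrt (b^2 - s^2)) in *.
  assert (Ha : 0 < a) by (apply sqrt_lt_R0; lra).
  assert (Hc : 0 < c) by (apply sqrt_lt_R0; lra).
  assert (HW : p / a + q / c = 1 / s).
  { replace (p/a+q/c) with ((p*s/a+q*s/c)/s) by (field; lra). rewrite HE. reflexivity. }
  assert (E : p * ((1 - x^2 - (1 - s^2)) / (2 * a)) + q * ((b^2 - x^2 - (b^2 - s^2)) / (2 * c))
              = (s^2 - x^2) / 2 * (p / a + q / c)) by (field; lra).
  rewrite HW in E.
  assert (E2 : (s^2 - x^2)/2 * (1/s) + x - s = - ((x - s)^2 / (2 * s))) by (field; lra).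
  nra.
Qed.

Lemma value_eq (p q b s : R) : 1 <= b -> 0 < s < 1 -> Eqn p q b s ->
  p / sqrt (1 - s ^ 2) + b ^ 2 * q / sqrt (b ^ 2 - s ^ 2) = F p q b s.
Proof.
  intros Hb Hs HE. unfold F, Eqn in *.
  assert (HA : 0 < 1 - s ^ 2) by nra.
  assert (HB : 0 < b ^ 2 - s ^ 2) by nra.
  pose proof (sqrt_sqrt _ (Rlt_le _ _ HA)) as EA.
  pose proof (sqrt_sqrt _ (Rlt_le _ _ HB)) as EB.
  set (a := sqrt (1 - s^2)) in *. set (c := sqrt (b^2 - s^2)) in *.
  assert (Ha : 0 < a) by (apply sqrt_lt_R0; lra).
  assert (Hc : 0 < c) by (apply sqrt_lt_R0; lra).
  transitivity (p * (a * a) / a + q * (c * c) / c + s * (p * s / a + q * s / c)).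
  - rewrite EA, EB. field; lra.
  - rewrite HE. field; lra.
Qed.

Lemma exists_s (p q b : R) : 1 <= p -> 0 <= q -> 1 <= b -> exists s, 0 < s < 1 /\ Eqn p q b s.
Proof.
  intros Hp Hq Hb.
  set (g := (((fct_cte p * id) / (comp sqrt (fct_cte 1 - (id * id)))) +
            ((fct_cte q * id) / (comp sqrt (fct_cte (b^2) - id * id))) - fct_cte 1)%F).
  assert (Hg : forall x, g x = p * x / sqrt (1 - x^2) + q * x / sqrt (b^2 - x^2) - 1).
  { intro x. unfold g, plus_fct, minus_fct, div_fct, mult_fct, comp, fct_cte, id. 
    replace (x^2) with (x*x) by ring. reflexivity. }
  assert (Hc : forall a, 0 <= a <= 4/5 -> continuity_pt g a).
  { intros a Ha. unfold g.
    assert (C1 : continuity_pt (id * id)%F a) by (apply continuity_pt_mult; apply derivable_continuous_pt, derivable_pt_id).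
    assert (Cid : continuity_pt id a) by (apply derivable_continuous_pt, derivable_pt_id).
    apply continuity_pt_minus; [apply continuity_pt_plus|apply continuity_pt_const; intros ?; reflexivity].
    - apply continuity_pt_div.
      + apply continuity_pt_mult; [apply continuity_pt_const; intros ?; reflexivity| exact Cid].
      + apply continuity_pt_comp.
        * apply continuity_pt_minus; [apply continuity_pt_const; intros ?; reflexivity| exact C1].
        * apply continuity_pt_sqrt. unfold minus_fct, fct_cte, mult_fct, id. nra.
      + unfold comp, minus_fct, fct_cte, mult_fct, id. apply Rgt_not_eq, sqrt_lt_R0. nra.
    - apply continuity_pt_div.
      + apply continuity_pt_mult; [apply continuity_pt_const; intros ?; reflexivity| exact Cid].
      + apply continuity_pt_comp.
        * apply continuity_pt_minus; [apply continuity_pt_const; intros ?; reflexivity| exact C1].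
        * apply continuity_pt_sqrt. unfold minus_fct, fct_cte, mult_fct, id. nra.
      + unfold comp, minus_fct, fct_cte, mult_fct, id. apply Rgt_not_eq, sqrt_lt_R0. nra. }
  assert (H0 : g 0 < 0).
  { rewrite Hg. replace (p*0/sqrt(1-0^2)) with 0 by (unfold Rdiv; ring).
    replace (q*0/sqrt(b^2-0^2)) with 0 by (unfold Rdiv; ring). lra. }
  assert (H1 : 0 < g (4/5)).
  { rewrite Hg.
    replace (sqrt (1 - (4/5)^2)) with (3/5).
    2:{ symmetry; apply sqrt_lem_1; lra. }
    assert (0 <= q * (4/5) / sqrt (b^2 - (4/5)^2)).
    { apply Rmult_le_pos; [nra| apply Rlt_le, Rinv_0_lt_compat, sqrt_lt_R0; nra]. }
    assert (p * (4/5) / (3/5) = 4/3 * p) by (field). lra. }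
  destruct (IVT_interv g 0 (4/5) Hc ltac:(lra) H0 H1) as [z [Hz Ez]].
  exists z. rewrite Hg in Ez.
  assert (z <> 0). { intro E. subst z. rewrite <- Hg in Ez. lra. }
  split; [lra|]. unfold Eqn. lra.
Qed.

Definition sk (k : nat) (b : R) := sigma_hat (2 * INR k) b.
Definition Mk (k : nat) (b : R) := F (INR k + 1) (INR k) b (sk k b).

Lemma sk_spec k b : 1 <= b -> 0 < sk k b < 1 /\ Eqn (INR k + 1) (INR k) b (sk k b).
Proof.
  intro Hb. destruct (qp_even k) as [Hq Hp].
  assert (Ex : exists s, 0 < s < 1 /\ sigma_eq (2 * INR k) b s).
  { destruct (exists_s (INR k + 1) (INR k) b) as [s [Hs Es]];
      [pose proof (pos_INR k); lra | apply pos_INR | exact Hb |].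
    exists s. split; [exact Hs|]. unfold sigma_eq. rewrite Hp, Hq. exact Es. }
  pose proof (epsilon_spec (inhabits 0) _ Ex) as H.
  fold (sigma_hat (2 * INR k) b) in H. fold (sk k b) in H.
  destruct H as [H1 H2]. split; [exact H1|]. unfold sigma_eq in H2. rewrite Hp, Hq in H2. exact H2.
Qed.

Lemma lfun_Mk k b : 1 <= b -> lfun (2 * INR k) b = Mk k b - 2 * INR k - sqrt 2.
Proof.
  intro Hb. destruct (qp_even k) as [Hq Hp]. destruct (sk_spec k b Hb) as [Hs Es].
  unfold lfun, Mk. fold (sk k b). rewrite Hp, Hq, value_eq; auto.
Qed.

Lemma delta_Mk k b : 1 <= b -> delta k b = Mk (S k) b - Mk k b - 2.
Proof.
  intro Hb. unfold delta. replace (2 * INR k + 2) with (2 * INR (S k)) by (rewrite S_INR; ring).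
  rewrite !lfun_Mk by exact Hb. rewrite S_INR. ring.
Qed.

Lemma Mk_max k b x : 1 <= b -> 0 <= x <= 1 -> F (INR k + 1) (INR k) b x <= Mk k b - (x - sk k b)^2 / (2 * sk k b).
Proof.
  intros Hb Hx. destruct (sk_spec k b Hb) as [Hs Es]. unfold Mk.
  apply max_prop; auto; [pose proof (pos_INR k); lra | apply pos_INR].
Qed.

Lemma Mk_max' k b x : 1 <= b -> 0 <= x <= 1 -> F (INR k + 1) (INR k) b x <= Mk k b.
Proof.
  intros Hb Hx. pose proof (Mk_max k b x Hb Hx). destruct (sk_spec k b Hb) as [Hs Es].
  assert (0 <= (x - sk k b)^2 / (2 * sk k b)) by (apply Rmult_le_pos; [apply pow2_ge_0| apply Rlt_le, Rinv_0_lt_compat; lra]).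
  lra.
Qed.

Lemma F_shift k b x : F (INR (S k) + 1) (INR (S k)) b x = F (INR k + 1) (INR k) b x + sqrt (1 - x^2) + sqrt (b^2 - x^2).
Proof. unfold F. rewrite S_INR. ring. Qed.

Lemma delta_upper k b : 1 <= b -> delta k b <= sqrt (1 - sk (S k) b ^ 2) + sqrt (b^2 - sk (S k) b ^ 2) - 2.
Proof.
  intro Hb. rewrite delta_Mk by exact Hb. destruct (sk_spec (S k) b Hb) as [Hs Es].
  pose proof (Mk_max' k b (sk (S k) b) Hb ltac:(lra)).
  unfold Mk at 1. rewrite F_shift. lra.
Qed.

Lemma delta_lower k b : 1 <= b -> sqrt (1 - sk k b ^ 2) + sqrt (b^2 - sk k b ^ 2) - 2 <= delta k b.
Proof.
  intro Hb. rewrite delta_Mk by exact Hb. destruct (sk_spec k b Hb) as [Hs Es].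
  pose proof (Mk_max' (S k) b (sk k b) Hb ltac:(lra)).
  rewrite F_shift in H. unfold Mk at 2. lra.
Qed.

Lemma sk_bound k b : 1 <= b -> (INR k + 1) * sk k b <= 1.
Proof.
  intro Hb. destruct (sk_spec k b Hb) as [Hs Es]. unfold Eqn in Es.
  set (s := sk k b) in *.
  assert (HA : 0 < 1 - s^2) by nra. assert (HB : 0 < b^2 - s^2) by nra.
  pose proof (sqrt_lt_R0 _ HA). pose proof (sqrt_lt_R0 _ HB).
  assert (sqrt (1 - s^2) <= 1) by (rewrite <- sqrt_1 at 2; apply sqrt_le_1_alt; nra).
  pose proof (pos_INR k).
  assert (0 <= INR k * s / sqrt (b^2 - s^2)) by (apply Rmult_le_pos; [apply Rmult_le_pos; lra| apply Rlt_le, Rinv_0_lt_compat; lra]).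
  assert (T : (INR k + 1) * s / sqrt (1 - s^2) <= 1) by lra.
  assert (T2 : (INR k + 1) * s <= (INR k + 1) * s / sqrt (1 - s^2)).
  { unfold Rdiv. rewrite <- (Rmult_1_r ((INR k + 1) * s)) at 1. apply Rmult_le_compat_l; [apply Rmult_le_pos; lra|].
    rewrite <- Rinv_1 at 1. apply Rinv_le_contravar; lra. }
  lra.
Qed.

Lemma sqrt_ge c x : 0 <= c -> c ^ 2 <= x -> c <= sqrt x.
Proof. intros Hc H. rewrite <- (sqrt_pow2 c Hc). apply sqrt_le_1_alt; lra. Qed.
Lemma sqrt_gt c x : 0 <= c -> c ^ 2 < x -> c < sqrt x.
Proof. intros Hc H. rewrite <- (sqrt_pow2 c Hc). apply sqrt_lt_1_alt; split; [apply pow2_ge_0|lra]. Qed.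
Lemma sqrt_le c x : 0 <= c -> x <= c ^ 2 -> sqrt x <= c.
Proof. intros Hc H. rewrite <- (sqrt_pow2 c Hc). apply sqrt_le_1_alt; lra. Qed.

Lemma sq_le_self y : 0 <= y <= 1 -> y ^ 2 <= y.
Proof. intros H. simpl. rewrite Rmult_1_r. rewrite <- (Rmult_1_r y) at 3. apply Rmult_le_compat_l; lra. Qed.

Lemma delta_neg1 k : delta k 1 < 0.
Proof.
  pose proof (delta_upper k 1 ltac:(lra)). destruct (sk_spec (S k) 1 ltac:(lra)) as [Hs _].
  set (s := sk (S k) 1) in *.
  assert (sqrt (1 - s^2) < 1).
  { rewrite <- sqrt_1 at 2. apply sqrt_lt_1_alt. split; nra. }
  replace (1^2) with 1 in H by ring. lra.
Qed.

Lemma delta_lower2 k b : 1 <= b -> b - 1 - 2 / (INR k + 1)^2 <= delta k b.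
Proof.
  intro Hb. pose proof (delta_lower k b Hb). pose proof (sk_bound k b Hb).
  destruct (sk_spec k b Hb) as [Hs _]. set (s := sk k b) in *. clearbody s. pose proof (pos_INR k).
  assert (Hs2 : s^2 <= 1 / (INR k + 1)^2).
  { apply (Rmult_le_reg_r ((INR k + 1)^2)); [nra|]. unfold Rdiv. rewrite Rmult_1_l, Rinv_l by nra.
    replace (s^2 * (INR k+1)^2) with (((INR k+1)*s)*((INR k+1)*s)) by ring.
    assert (0 <= (INR k + 1) * s) by (apply Rmult_le_pos; lra).
    apply Rle_trans with (1 * ((INR k+1)*s)); [apply Rmult_le_compat_r; lra| lra]. }
  assert (1 - s^2 <= sqrt (1 - s^2)).
  { assert (0 <= s^2 <= 1) by nra. apply sqrt_ge; [lra|apply sq_le_self; lra]. }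
  assert (b - s^2 <= sqrt (b^2 - s^2)).
  { apply sqrt_ge; [nra|]. assert (s^2 * s^2 <= s^2 * (2*b - 1)) by (apply Rmult_le_compat_l; nra). nra. }
  unfold Rdiv in *. lra.
Qed.

Lemma beta_bound k b : 1 <= b -> delta k b = 0 -> b <= 1 + 2 / (INR k + 1)^2.
Proof. intros Hb H. pose proof (delta_lower2 k b Hb). lra. Qed.

Lemma sqrt2_sq : sqrt 2 ^ 2 = 2.
Proof. apply pow2_sqrt; lra. Qed.

Lemma sqrt2_bounds : 1.41 < sqrt 2 < 1.415.
Proof. split; [apply sqrt_gt|apply Rle_lt_trans with 1.4143; [apply sqrt_le|]]; lra. Qed.

Lemma delta_pos_sqrt2 k : 0 < delta k (sqrt 2).
Proof.
  pose proof sqrt2_bounds as H2.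
  destruct k as [|k].
  - rewrite delta_Mk by lra.
    pose proof (Mk_max' 1 (sqrt 2) (1/2) ltac:(lra) ltac:(lra)) as H1.
    unfold F in H1. rewrite sqrt2_sq in H1. simpl INR in H1.
    assert (0.86 < sqrt (1 - (1/2)^2)) by (apply sqrt_gt; lra).
    assert (1.32 < sqrt (2 - (1/2)^2)) by (apply sqrt_gt; lra).
    destruct (sk_spec 0 (sqrt 2) ltac:(lra)) as [Hs _].
    unfold Mk at 2. unfold F. simpl INR. set (s := sk 0 (sqrt 2)) in *.
    assert (sqrt (1 - s^2) + s <= sqrt 2).
    { pose proof (sqrt_pos (1 - s^2)). pose proof (pow2_sqrt (1 - s^2) ltac:(nra)).
      apply sqrt_ge; [lra|]. pose proof (pow2_ge_0 (sqrt (1 - s^2) - s)). nra. }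
    lra.
  - pose proof (delta_lower (S k) (sqrt 2) ltac:(lra)) as H.
    pose proof (sk_bound (S k) (sqrt 2) ltac:(lra)) as Hb.
    destruct (sk_spec (S k) (sqrt 2) ltac:(lra)) as [Hs _].
    rewrite sqrt2_sq in H. set (s := sk (S k) (sqrt 2)) in *.
    rewrite S_INR in Hb. pose proof (pos_INR k).
    assert (s <= 1/2) by nra.
    assert (0.86 <= sqrt (1 - s^2)) by (apply sqrt_ge; nra).
    assert (1.32 <= sqrt (2 - s^2)) by (apply sqrt_ge; nra).
    lra.
Qed.

Lemma sqrt_holder x y : 0 <= x -> 0 <= y -> sqrt y - sqrt (Rabs (x - y)) <= sqrt x.
Proof.
  intros Hx Hy. pose proof (sqrt_pos x). pose proof (sqrt_pos (Rabs (x - y))).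
  assert (sqrt y <= sqrt x + sqrt (Rabs (x - y))); [|lra].
  apply sqrt_le; [lra|].
  pose proof (pow2_sqrt x Hx). pose proof (pow2_sqrt (Rabs (x-y)) (Rabs_pos _)).
  pose proof (Rmult_le_pos _ _ H H0).
  assert (y <= x + Rabs (x - y)) by (unfold Rabs; destruct Rcase_abs; lra).
  nra.
Qed.

Lemma Mk_holder k b b' : 1 <= b -> 1 <= b' -> Mk k b - INR k * sqrt (Rabs (b'^2 - b^2)) <= Mk k b'.
Proof.
  intros Hb Hb'. destruct (sk_spec k b Hb) as [Hs _].
  pose proof (Mk_max' k b' (sk k b) Hb' ltac:(lra)) as H.
  unfold Mk at 1. unfold F in *. set (s := sk k b) in *.
  pose proof (sqrt_holder (b'^2 - s^2) (b^2 - s^2) ltac:(nra) ltac:(nra)) as Hh.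
  replace (b'^2 - s^2 - (b^2 - s^2)) with (b'^2 - b^2) in Hh by ring.
  pose proof (pos_INR k).
  assert (INR k * (sqrt (b ^ 2 - s ^ 2) - sqrt (Rabs (b' ^ 2 - b ^ 2))) <= INR k * sqrt (b' ^ 2 - s ^ 2))
    by (apply Rmult_le_compat_l; lra).
  lra.
Qed.

Lemma delta_holder k b b' : 1 <= b -> 1 <= b' ->
  Rabs (delta k b' - delta k b) <= (2 * INR k + 1) * sqrt (Rabs (b'^2 - b^2)).
Proof.
  intros Hb Hb'. rewrite !delta_Mk by lra.
  pose proof (Mk_holder k b b' Hb Hb'). pose proof (Mk_holder k b' b Hb' Hb).
  pose proof (Mk_holder (S k) b b' Hb Hb'). pose proof (Mk_holder (S k) b' b Hb' Hb).
  rewrite Rabs_minus_sym in H0, H2. rewrite S_INR in *.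
  apply Rabs_le. split; lra.
Qed.

Definition clamp (x : R) := Rmin (Rmax x 1) (sqrt 2).

Lemma clamp_in x : 1 <= clamp x <= sqrt 2.
Proof. pose proof sqrt2_bounds. unfold clamp, Rmin, Rmax; repeat destruct Rle_dec; lra. Qed.

Lemma clamp_lip x y : Rabs (clamp x - clamp y) <= Rabs (x - y).
Proof.
  pose proof sqrt2_bounds. unfold clamp, Rmin, Rmax.
  repeat destruct Rle_dec; unfold Rabs; repeat destruct Rcase_abs; lra.
Qed.

Lemma clamp_id x : 1 <= x <= sqrt 2 -> clamp x = x.
Proof. intros H. unfold clamp, Rmin, Rmax; repeat destruct Rle_dec; lra. Qed.

Lemma h_cont k x0 : continuity_pt (fun x => delta k (clamp x)) x0.
Proof.
  set (C := 2 * INR k + 1). assert (HC : 0 < C) by (pose proof (pos_INR k); unfold C; lra).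
  unfold continuity_pt, continue_in, limit1_in, limit_in. intros eps Heps.
  exists ((eps / (C + 1))^2 / 3). split.
  { apply Rmult_lt_0_compat; [apply pow_lt; apply Rdiv_lt_0_compat; lra | lra]. }
  intros x [_ Hx]. simpl in *. unfold R_dist in *.
  pose proof (clamp_in x). pose proof (clamp_in x0). pose proof (clamp_lip x x0).
  pose proof (delta_holder k (clamp x0) (clamp x) ltac:(lra) ltac:(lra)) as Hd.
  fold C in Hd.
  assert (Habs : Rabs (clamp x ^ 2 - clamp x0 ^ 2) <= 3 * Rabs (x - x0)).
  { replace (clamp x ^ 2 - clamp x0 ^ 2) with ((clamp x - clamp x0) * (clamp x + clamp x0)) by ring.
    rewrite Rabs_mult. pose proof sqrt2_bounds.
    rewrite (Rabs_right (clamp x + clamp x0)) by lra.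
    pose proof (Rabs_pos (clamp x - clamp x0)). nra. }
  assert (Hs : sqrt (Rabs (clamp x ^ 2 - clamp x0 ^ 2)) < eps / (C + 1)).
  { apply Rle_lt_trans with (sqrt (3 * Rabs (x - x0))); [apply sqrt_le_1_alt; lra|].
    rewrite <- (sqrt_pow2 (eps / (C + 1))) by (apply Rlt_le, Rdiv_lt_0_compat; lra).
    apply sqrt_lt_1_alt. split; [pose proof (Rabs_pos (x - x0)); lra| lra]. }
  pose proof (sqrt_pos (Rabs (clamp x ^ 2 - clamp x0 ^ 2))).
  assert (C * sqrt (Rabs (clamp x ^ 2 - clamp x0 ^ 2)) <= (C + 1) * sqrt (Rabs (clamp x ^ 2 - clamp x0 ^ 2))) by nra.
  assert ((C + 1) * sqrt (Rabs (clamp x ^ 2 - clamp x0 ^ 2)) < (C + 1) * (eps / (C + 1))) by (apply Rmult_lt_compat_l; lra).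
  replace ((C + 1) * (eps / (C + 1))) with eps in * by (field; lra).
  lra.
Qed.

Lemma zero_exists k : exists b, 1 < b < sqrt 2 /\ delta k b = 0.
Proof.
  pose proof sqrt2_bounds.
  assert (H1 : (fun x => delta k (clamp x)) 1 < 0) by (simpl; rewrite clamp_id by lra; apply delta_neg1).
  assert (H2 : 0 < (fun x => delta k (clamp x)) (sqrt 2)) by (simpl; rewrite clamp_id by lra; apply delta_pos_sqrt2).
  destruct (IVT_interv (fun x => delta k (clamp x)) 1 (sqrt 2) (fun a _ => h_cont k a) ltac:(lra) H1 H2) as [z [Hz Ez]].
  simpl in *. rewrite clamp_id in Ez by lra.
  exists z. split; [|exact Ez].
  split; destruct (Rle_lt_or_eq_dec _ _ (proj1 Hz)) as [?|E]; try lra;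
    try (destruct (Rle_lt_or_eq_dec _ _ (proj2 Hz)) as [?|E2]; try lra);
    try (subst z; pose proof (delta_neg1 k); lra);
    try (rewrite E2 in Ez; pose proof (delta_pos_sqrt2 k); lra).
Qed.

Lemma beta_c_spec k : 1 < beta_c k < sqrt 2 /\ delta k (beta_c k) = 0.
Proof. unfold beta_c. apply epsilon_spec. apply zero_exists. Qed.

Lemma h_lower s b b' : 0 <= s ^ 2 <= 1 -> 1 <= b <= b' ->
  b' - b <= sqrt (b'^2 - s^2) - sqrt (b^2 - s^2).
Proof.
  intros Hs Hb.
  pose proof (pow2_sqrt (b'^2 - s^2) ltac:(nra)) as Eu. pose proof (pow2_sqrt (b^2 - s^2) ltac:(nra)) as Ev.
  set (u := sqrt (b'^2 - s^2)) in *. set (v := sqrt (b^2 - s^2)) in *.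
  assert (0 <= u) by apply sqrt_pos. assert (0 <= v) by apply sqrt_pos.
  assert (Hub : v * b' <= u * b).
  { assert ((v * b')^2 <= (u*b)^2).
    { replace ((v*b')^2) with (v^2 * b'^2) by ring. replace ((u*b)^2) with (u^2*b^2) by ring.
      rewrite Eu, Ev. assert (0 <= s^2 * (b'^2 - b^2)) by (apply Rmult_le_pos; nra). nra. }
    assert (0 <= v * b') by (apply Rmult_le_pos; lra). assert (0 <= u * b) by (apply Rmult_le_pos; lra).
    nra. }
  assert (v + b' <= u + b); [|lra].
  assert ((v + b')^2 <= (u+b)^2).
  { replace ((v+b')^2) with (v^2 + b'^2 + 2 * (v*b')) by ring.
    replace ((u+b)^2) with (u^2 + b^2 + 2*(u*b)) by ring. rewrite Eu, Ev. lra. }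
  nra.
Qed.

Lemma h_upper (j s b b' : R) : 0 <= j -> 0 <= s -> (j + 1) * s <= 1 -> s < 1 -> 1 <= b <= b' ->
  j * (sqrt (b'^2 - s^2) - sqrt (b^2 - s^2)) <= (j + 1) * (b' - b).
Proof.
  intros Hj Hs0 Hjs Hs1 Hb.
  assert (Hs2 : 0 <= s^2 <= 1) by nra.
  pose proof (h_lower s b b' Hs2 Hb) as HD.
  pose proof (pow2_sqrt (b'^2 - s^2) ltac:(nra)) as Eu. pose proof (pow2_sqrt (b^2 - s^2) ltac:(nra)) as Ev.
  set (u := sqrt (b'^2 - s^2)) in *. set (v := sqrt (b^2 - s^2)) in *.
  assert (0 <= u) by apply sqrt_pos. assert (0 <= v) by apply sqrt_pos.
  assert (Hu : b' - s^2 <= u).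
  { apply sqrt_ge; [lra|]. assert (s^2 * s^2 <= s^2 * (2*b' - 1)) by (apply Rmult_le_compat_l; nra). nra. }
  assert (Hv : b - s^2 <= v).
  { apply sqrt_ge; [lra|]. assert (s^2 * s^2 <= s^2 * (2*b - 1)) by (apply Rmult_le_compat_l; nra). nra. }
  set (S := b + b'). set (D := u - v). set (d := b' - b).
  assert (Hs3 : s^2 < 1) by nra.
  assert (HS : 0 < S - 2 * s^2) by (unfold S; lra).
  assert (H1 : D * (S - 2 * s^2) <= d * S).
  { assert (D * (S - 2*s^2) <= D * (u + v)) by (apply Rmult_le_compat_l; unfold D, S in *; lra).
    assert (D * (u + v) = d * S) by (unfold D, d, S; replace ((u - v) * (u + v)) with (u^2 - v^2) by ring; rewrite Eu, Ev; ring).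
    lra. }
  assert (H2 : 2 * (j + 1) * s^2 <= S).
  { assert ((j+1) * s^2 <= s) by (replace ((j+1)*s^2) with (((j+1)*s)*s) by ring;
        apply Rle_trans with (1*s); [apply Rmult_le_compat_r; lra | lra]).
    unfold S; lra. }
  assert (Hd : 0 <= d) by (unfold d; lra).
  apply (Rmult_le_reg_r (S - 2 * s^2)); [exact HS|].
  assert (j * D * (S - 2*s^2) <= j * (d * S)) by (rewrite Rmult_assoc; apply Rmult_le_compat_l; lra).
  assert (0 <= d * (S - 2 * (j+1) * s^2)) by (apply Rmult_le_pos; lra).
  fold D. nra.
Qed.

Lemma delta_mono j b b' : 1 <= b <= b' -> delta j b <= delta j b'.
Proof.
  intros Hb. rewrite !delta_Mk by lra.
  destruct (sk_spec (S j) b ltac:(lra)) as [Hs1 _].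
  destruct (sk_spec j b' ltac:(lra)) as [Hs0 _].
  pose proof (Mk_max' (S j) b' (sk (S j) b) ltac:(lra) ltac:(lra)) as A1.
  pose proof (Mk_max' j b (sk j b') ltac:(lra) ltac:(lra)) as A0.
  pose proof (sk_bound j b' ltac:(lra)) as Bd.
  pose proof (h_lower (sk (S j) b) b b' ltac:(nra) Hb) as HL.
  pose proof (h_upper (INR j) (sk j b') b b' (pos_INR j) ltac:(lra) Bd ltac:(lra) Hb) as HU.
  unfold Mk, F in *. rewrite S_INR in *. pose proof (pos_INR j).
  set (s1 := sk (S j) b) in *. set (s0 := sk j b') in *.
  assert ((INR j + 1) * (b' - b) <= (INR j + 1) * (sqrt (b' ^ 2 - s1 ^ 2) - sqrt (b ^ 2 - s1 ^ 2)))
    by (apply Rmult_le_compat_l; lra).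
  lra.
Qed.

Lemma delta_step k b : 1 <= b -> delta k b < delta (S k) b.
Proof.
  intros Hb. rewrite !delta_Mk by lra.
  destruct (sk_spec (S k) b Hb) as [Hs1 E1].
  destruct (sk_spec (S (S k)) b Hb) as [Hs2 E2].
  pose proof (Mk_max (S (S k)) b (sk (S k) b) Hb ltac:(lra)) as A2.
  pose proof (Mk_max' k b (sk (S k) b) Hb ltac:(lra)) as A0.
  assert (Hne : sk (S k) b <> sk (S (S k)) b).
  { intro E. rewrite <- E in E2. unfold Eqn in E1, E2. rewrite S_INR in E2.
    set (s := sk (S k) b) in *.
    assert (HA : 0 < 1 - s ^ 2) by nra. assert (HB : 0 < b ^ 2 - s ^ 2) by nra.
    pose proof (sqrt_lt_R0 _ HA). pose proof (sqrt_lt_R0 _ HB).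
    assert (0 < s / sqrt (1 - s^2)) by (apply Rdiv_lt_0_compat; lra).
    assert (0 < s / sqrt (b^2 - s^2)) by (apply Rdiv_lt_0_compat; lra).
    assert ((INR (S k) + 1 + 1) * s / sqrt (1 - s ^ 2) + (INR (S k) + 1) * s / sqrt (b ^ 2 - s ^ 2)
      = (INR (S k) + 1) * s / sqrt (1 - s ^ 2) + INR (S k) * s / sqrt (b ^ 2 - s ^ 2)
        + s / sqrt (1 - s^2) + s / sqrt (b^2 - s^2)) by (field; lra).
    lra. }
  assert (Hp : 0 < (sk (S k) b - sk (S (S k)) b) ^ 2 / (2 * sk (S (S k)) b)).
  { apply Rdiv_lt_0_compat; [|lra].
    replace ((sk (S k) b - sk (S (S k)) b) ^ 2) with (Rsqr (sk (S k) b - sk (S (S k)) b)) by (unfold Rsqr; ring).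
    apply Rsqr_pos_lt. lra. }
  assert (Hsum : F (INR (S (S k)) + 1) (INR (S (S k))) b (sk (S k) b) + F (INR k + 1) (INR k) b (sk (S k) b)
     = 2 * Mk (S k) b) by (unfold Mk, F; rewrite !S_INR; ring).
  lra.
Qed.

Theorem lemma3p13 :
  (forall k : nat, beta_c (S k) < beta_c k) /\ Un_cv beta_c 1.
Proof.
  split.
  - intro k. destruct (beta_c_spec k) as [Hb Eb]. destruct (beta_c_spec (S k)) as [Hb' Eb'].
    destruct (Rlt_or_le (beta_c (S k)) (beta_c k)) as [H|H]; [exact H|].
    pose proof (delta_mono (S k) (beta_c k) (beta_c (S k)) ltac:(lra)).
    pose proof (delta_step k (beta_c k) ltac:(lra)). lra.
  - intros eps Heps.
    destruct (archimed_cor1 (eps / 2) ltac:(lra)) as [N [HN HN0]].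
    exists N. intros n Hn. unfold R_dist.
    destruct (beta_c_spec n) as [Hb Eb].
    pose proof (beta_bound n (beta_c n) ltac:(lra) Eb).
    assert (HnN : INR N <= INR n) by (apply le_INR; lia).
    assert (HN1 : 0 < INR N) by (apply lt_0_INR; lia).
    assert (Hq : 2 / (INR n + 1) ^ 2 < eps).
    { apply Rle_lt_trans with (2 / INR N).
      - unfold Rdiv. apply Rmult_le_compat_l; [lra|]. apply Rinv_le_contravar; [lra|]. nra.
      - assert (2 / INR N = 2 * / INR N) by reflexivity. lra. }
    rewrite Rabs_right by lra. lra.
Qed.
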